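(* Let ${\cal X}$, ${\cal V}$, ${\cal Y}$ be finite alphabets, $P_X$ a distribution on ${\cal X}$, $P_{V|X}$ a channel from ${\cal X}$ to ${\cal V}$, and $d$ a nonnegative convex function on probability distributions on ${\cal X}\times{\cal Y}$ (i.e., ${\rm E}_J[d(P_{X_JY_J})]\ge d({\rm E}_J[P_{X_JY_J}])$ for every finite random variable $J$). Let $X^L$ be i.i.d. with distribution $P_X$, let $V^L$ be obtained from $X^L$ through the memoryless channel $P_{V|X}$, and let $Y^L$ be the output of a code of block length $L$ with $2^{LR}$ code words in ${\cal Y}^L$ whose (possibly random) encoder sees only $V^L$, so that $Y^L$ is conditionally independent of $X^L$ given $V^L$. If ${\rm E}[d(P^e_{X^LY^L})]=\Delta$, then $$R\ \ge\ \min_{P_{Y|V}:\ d(P_{XY})\le\Delta} I(V;Y),$$ where for a channel $P_{Y|V}$ the joint law is $P_{XVY}=P_XP_{V|X}P_{Y|V}$, $P_{XY}$ is its $(X,Y)$-marginal, and $I(V;Y)$ is computed from its $(V,Y)$-marginal.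
   Context: For strings $x^L\in{\cal X}^L$, $y^L\in{\cal Y}^L$, the empirical distribution is $P^e_{x^Ly^L}(a,b)=\frac1L|\{\ell:(x_\ell,y_\ell)=(a,b)\}|$ for $a\in{\cal X}$, $b\in{\cal Y}$. Mutual information is $I(V;Y)=\sum_{(v,y)\in\mathrm{supp}P_{VY}}P_{VY}(v,y)\log_2\frac{P_{VY}(v,y)}{P_V(v)P_Y(y)}$. *)

(* Defs.v *)
From HB Require Import structures.
From mathcomp Require Import all_boot all_order all_algebra.
From mathcomp Require Import all_classical all_reals all_analysis.
Set Implicit Arguments. Unset Strict Implicit. Unset Printing Implicit Defensive.
Import Order.TTheory GRing.Theory Num.Theory.
Local Open Scope ring_scope.

Section Defs.
Variable R : realType.

Definition log2 (x : R) : R := ln x / ln 2.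

Definition is_dist (T : finType) (p : {ffun T -> R}) : Prop :=
  (forall t, 0 <= p t) /\ \sum_(t : T) p t = 1.

Definition is_channel (A B : finType) (W : {ffun A -> {ffun B -> R}}) : Prop :=
  forall a, is_dist (W a).

Definition marg1 (A B : finType) (P : {ffun A * B -> R}) : {ffun A -> R} :=
  [ffun a => \sum_(b : B) P (a, b)].
Definition marg2 (A B : finType) (P : {ffun A * B -> R}) : {ffun B -> R} :=
  [ffun b => \sum_(a : A) P (a, b)].
Definition mutinfo (A B : finType) (P : {ffun A * B -> R}) : R :=
  \sum_(ab : A * B | P ab != 0)
     P ab * log2 (P ab / (marg1 P ab.1 * marg2 P ab.2)).

(* d is nonnegative and convex on the probability distributions on T:
   E_J[d(Q_J)] >= d(E_J[Q_J]) for every finite random variable J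
   (J uniform over 'I_n with law w). *)
Definition mixture (T : finType) (n : nat) (w : {ffun 'I_n -> R})
  (Q : 'I_n -> {ffun T -> R}) : {ffun T -> R} :=
  [ffun t => \sum_(j < n) w j * Q j t].
Definition nonneg_convex_dist (T : finType) (d : {ffun T -> R} -> R) : Prop :=
  (forall p, is_dist p -> 0 <= d p) /\
  (forall (n : nat) (w : {ffun 'I_n -> R}) (Q : 'I_n -> {ffun T -> R}),
     is_dist w -> (forall j, is_dist (Q j)) ->
     d (mixture w Q) <= \sum_(j < n) w j * d (Q j)).

Definition empirical (X Y : finType) (L : nat) (x : L.-tuple X) (y : L.-tuple Y)
  : {ffun X * Y -> R} :=
  [ffun ab => #|[set l : 'I_L | (tnth x l, tnth y l) == ab]|%:R / L%:R].

Definition joint_XY (X V Y : finType) (PX : {ffun X -> R})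
  (PVX : {ffun X -> {ffun V -> R}}) (W : {ffun V -> {ffun Y -> R}})
  : {ffun X * Y -> R} :=
  [ffun ab => \sum_(v : V) PX ab.1 * PVX ab.1 v * W v ab.2].
Definition joint_VY (X V Y : finType) (PX : {ffun X -> R})
  (PVX : {ffun X -> {ffun V -> R}}) (W : {ffun V -> {ffun Y -> R}})
  : {ffun V * Y -> R} :=
  [ffun vb => \sum_(x : X) PX x * PVX x vb.1 * W vb.1 vb.2].

Definition block_law (X V Y : finType) (L : nat) (PX : {ffun X -> R})
  (PVX : {ffun X -> {ffun V -> R}})
  (enc : {ffun L.-tuple V -> {ffun L.-tuple Y -> R}})
  (x : L.-tuple X) (v : L.-tuple V) (y : L.-tuple Y) : R :=
  (\prod_(l < L) (PX (tnth x l) * PVX (tnth x l) (tnth v l))) * enc v y.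

Definition expected_distortion (X V Y : finType) (L : nat) (PX : {ffun X -> R})
  (PVX : {ffun X -> {ffun V -> R}})
  (enc : {ffun L.-tuple V -> {ffun L.-tuple Y -> R}})
  (d : {ffun X * Y -> R} -> R) : R :=
  \sum_(x : L.-tuple X) \sum_(v : L.-tuple V) \sum_(y : L.-tuple Y)
     block_law PX PVX enc x v y * d (empirical x y).

End Defs.

(* Main.v *)
Require Import Defs.
From HB Require Import structures.
From mathcomp Require Import all_boot all_order all_algebra.
From mathcomp Require Import all_classical all_reals all_analysis.
From mathcomp Require Import ring lra.
Import Order.TTheory GRing.Theory Num.Theory.
Local Open Scope ring_scope.

Lemma sum_tuple_prod (R : comNzRingType) (T : finType) (L : nat)
  (F : 'I_L -> T -> R) :
  \sum_(t : L.-tuple T) \prod_(k < L) F k (tnth t k) =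
  \prod_(k < L) \sum_(a : T) F k a.
Proof.
rewrite bigA_distr_bigA /=.
rewrite (reindex (fun f : {ffun 'I_L -> T} => [tuple f i | i < L])) /=.
  by apply: eq_bigr => f _; apply: eq_bigr => k _; rewrite tnth_mktuple.
exists (fun t : L.-tuple T => [ffun i => tnth t i]) => [f _|t _].
  by apply/ffunP => i; rewrite ffunE tnth_mktuple.
by apply: eq_from_tnth => i; rewrite tnth_mktuple ffunE.
Qed.

Lemma ln_le_sub1 (R : realType) (x : R) : 0 < x -> ln x <= x - 1.
Proof.
move=> x0; have := @le_ln1Dx R (x - 1).
have -> : 1 + (x - 1) = x by rewrite addrC subrK.
apply; lra.
Qed.

Lemma gibbs (R : realType) (I : finType) (Q T : I -> R) :
  (forall i, 0 <= Q i) -> (forall i, Q i != 0 -> 0 < T i) ->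
  \sum_(i | Q i != 0) Q i * (ln (T i) - ln (Q i)) <=
  \sum_(i | Q i != 0) T i - \sum_i Q i.
Proof.
move=> Q0 T0.
have -> : \sum_i Q i = \sum_(i | Q i != 0) Q i.
  rewrite [RHS]big_mkcond; apply: eq_bigr => i _.
  by case: eqP => // ->.
rewrite -sumrB; apply: ler_sum => i Qi.
have Qp : 0 < Q i by rewrite lt_def Qi Q0.
have Tp := T0 _ Qi.
rewrite -ln_div ?posrE //.
have H := @ln_le_sub1 R _ (divr_gt0 Tp Qp).
rewrite -(ler_pM2l Qp) in H; apply: (le_trans H).
by rewrite mulrBr mulr1 mulrCA divff ?mulr1 // gt_eqF.
Qed.

Lemma sum_tuple_prod_fix (R : comNzRingType) (T : finType) (L : nat)
  (l : 'I_L) (c : T) (h : 'I_L -> T -> R) :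
  \sum_(t : L.-tuple T | tnth t l == c) h l (tnth t l) * \prod_(k < L | k != l) h k (tnth t k) =
  h l c * \prod_(k < L | k != l) \sum_(a : T) h k a.
Proof.
pose F (k : 'I_L) (a : T) : R := if k == l then (a == c)%:R * h k a else h k a.
have E := @sum_tuple_prod R T L F.
rewrite [RHS](bigD1 l) //= in E.
have E1 : \sum_(a : T) F l a = h l c.
  rewrite (bigD1 c) //= /F !eqxx mul1r big1 ?addr0 // => a /negbTE ->.
  by rewrite mul0r.
have E2 : \prod_(k < L | k != l) \sum_a F k a = \prod_(k < L | k != l) \sum_a h k a.
  by apply: eq_bigr => k /negbTE kl; rewrite /F kl.
rewrite E1 E2 in E; rewrite -E big_mkcond /=; apply: eq_bigr => t _.
rewrite [RHS](bigD1 l) //=.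
have -> : \prod_(k < L | k != l) F k (tnth t k) = \prod_(k < L | k != l) h k (tnth t k).
  by apply: eq_bigr => k /negbTE kl; rewrite /F kl.
rewrite /F eqxx.
by case: eqP => [->|_]; rewrite ?mul1r ?mul0r.
Qed.

Lemma sum_partition (R : nmodType) (T U : finType) (f : T -> U) (G : T -> R) :
  \sum_(u : U) \sum_(t | f t == u) G t = \sum_t G t.
Proof.
rewrite (exchange_big_dep xpredT) //=; apply: eq_bigr => t _.
by rewrite (big_pred1 (f t)) // => u; rewrite eq_sym.
Qed.

Lemma ln_prod (R : realType) (I : finType) (P : pred I) (F : I -> R) :
  (forall i, P i -> 0 < F i) -> ln (\prod_(i | P i) F i) = \sum_(i | P i) ln (F i).
Proof.
move=> F0.
have : 0 < \prod_(i | P i) F i /\ \sum_(i | P i) ln (F i) = ln (\prod_(i | P i) F i).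
  apply: (big_rec2 (fun x y => 0 < y /\ x = ln y)); first by rewrite ln1.
  move=> i x y Pi [y0 ->]; split; first by rewrite mulr_gt0 // F0.
  by rewrite lnM ?posrE // F0.
by case=> _ ->.
Qed.

Lemma convex_fin (R : realType) (T I : finType) (d : {ffun T -> R} -> R)
  (hd : nonneg_convex_dist d) (w : I -> R) (Q : I -> {ffun T -> R}) :
  (forall i, 0 <= w i) -> \sum_i w i = 1 -> (forall i, is_dist (Q i)) ->
  d [ffun t => \sum_i w i * Q i t] <= \sum_i w i * d (Q i).
Proof.
move=> w0 w1 Qd.
have E : forall F : I -> R, \sum_i F i = \sum_(j < #|I|) F (enum_val j).
  by move=> F; rewrite -(big_enum_val (A := predT)).
pose w' := [ffun j : 'I_#|I| => w (enum_val j)].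
have := hd.2 #|I| w' (fun j => Q (enum_val j)).
have -> : mixture w' (fun j => Q (enum_val j)) = [ffun t => \sum_i w i * Q i t].
  by apply/ffunP => t; rewrite !ffunE E; apply: eq_bigr => j _; rewrite ffunE.
have -> : \sum_i w i * d (Q i) = \sum_(j < #|I|) w' j * d (Q (enum_val j)).
  by rewrite E; apply: eq_bigr => j _; rewrite ffunE.
apply.
  by split => [j|]; rewrite ?ffunE // -w1 E; apply: eq_bigr => j _; rewrite ffunE.
by move=> j; apply: Qd.
Qed.

Section Main.
Variables (R : realType) (X V Y : finType) (PX : {ffun X -> R})
  (PVX : {ffun X -> {ffun V -> R}}) (L : nat)
  (enc : {ffun L.-tuple V -> {ffun L.-tuple Y -> R}}).
Hypotheses (PXd : is_dist PX) (PVXc : is_channel PVX) (L0 : (0 < L)%N)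
  (encd : forall v, is_dist (enc v)).
Variable (C : {set L.-tuple Y}).
Hypothesis (encC : forall v y, enc v y != 0 -> y \in C).

Definition g a v := PX a * PVX a v.
Definition PV v := \sum_a g a v.
Definition p (vs : L.-tuple V) := \prod_(k < L) PV (tnth vs k).
Definition Qj vs ys := p vs * enc vs ys.
Definition Ml (l : 'I_L) v b :=
  \sum_(vs : L.-tuple V | tnth vs l == v) \sum_(ys : L.-tuple Y | tnth ys l == b)
     (\prod_(k < L | k != l) PV (tnth vs k)) * enc vs ys.
Definition Mbar v b := L%:R^-1 * \sum_(l < L) Ml l v b.
Definition Wb : {ffun V -> {ffun Y -> R}} := [ffun v => [ffun b => Mbar v b]].
Definition Ql (l : 'I_L) v b :=
  \sum_(vs : L.-tuple V | tnth vs l == v) \sum_(ys : L.-tuple Y | tnth ys l == b) Qj vs ys.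
Definition Qbar v b := PV v * Mbar v b.
Definition qbar b := \sum_v Qbar v b.

Lemma g_ge0 a v : 0 <= g a v.
Proof. by rewrite mulr_ge0 //; [case: PXd | case: (PVXc a)]. Qed.

Lemma PV_ge0 v : 0 <= PV v.
Proof. by apply: sumr_ge0 => a _; apply: g_ge0. Qed.

Lemma sum_PV : \sum_v PV v = 1.
Proof.
rewrite /PV exchange_big /=; case: PXd => _ <-; apply: eq_bigr => a _.
by rewrite /g -mulr_sumr; case: (PVXc a) => _ ->; rewrite mulr1.
Qed.

Lemma p_ge0 vs : 0 <= p vs.
Proof. by apply: prodr_ge0 => k _; apply: PV_ge0. Qed.

Lemma sum_p : \sum_vs p vs = 1.
Proof.
rewrite /p (@sum_tuple_prod _ _ _ (fun k => PV)) big1 // => k _; exact: sum_PV.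
Qed.

Lemma enc_ge0 vs ys : 0 <= enc vs ys.
Proof. by case: (encd vs). Qed.

Lemma enc_le1 vs ys : enc vs ys <= 1.
Proof.
case: (encd vs) => e0 <-; rewrite (bigD1 ys) //= lerDl.
by apply: sumr_ge0 => y _.
Qed.

Lemma Qj_ge0 vs ys : 0 <= Qj vs ys.
Proof. by rewrite mulr_ge0 ?p_ge0 ?enc_ge0. Qed.

Lemma sum_Qj : \sum_vs \sum_ys Qj vs ys = 1.
Proof.
rewrite -sum_p; apply: eq_bigr => vs _.
by rewrite /Qj -mulr_sumr; case: (encd vs) => _ ->; rewrite mulr1.
Qed.

Lemma Ml_ge0 l v b : 0 <= Ml l v b.
Proof.
apply: sumr_ge0 => vs _; apply: sumr_ge0 => ys _.
by rewrite mulr_ge0 ?enc_ge0 // prodr_ge0 // => k _; apply: PV_ge0.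
Qed.

Lemma sum_Ml l v : \sum_b Ml l v b = 1.
Proof.
rewrite /Ml exchange_big /=.
transitivity (\sum_(vs : L.-tuple V | tnth vs l == v)
   (fun k a => if k == l then 1 else PV a) l (tnth vs l) *
   \prod_(k < L | k != l) (fun k a => if k == l then 1 else PV a) k (tnth vs k)).
  apply: eq_bigr => vs _; rewrite sum_partition -mulr_sumr /= eqxx mul1r.
  case: (encd vs) => _ ->; rewrite mulr1.
  by apply: eq_bigr => k /negbTE ->.
rewrite (@sum_tuple_prod_fix _ _ _ l v (fun k a => if k == l then 1 else PV a)) eqxx mul1r big1 // => k /negbTE ->.
exact: sum_PV.
Qed.

Lemma Mbar_ge0 v b : 0 <= Mbar v b.
Proof.
by rewrite mulr_ge0 ?invr_ge0 ?ler0n // sumr_ge0 // => l _; apply: Ml_ge0.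
Qed.

Lemma sum_Mbar v : \sum_b Mbar v b = 1.
Proof.
rewrite /Mbar -mulr_sumr exchange_big /=.
rewrite (eq_bigr (fun _ => 1)) => [|l _]; last exact: sum_Ml.
by rewrite sumr_const card_ord mulVf // pnatr_eq0 -lt0n.
Qed.

Lemma Wb_channel : is_channel Wb.
Proof.
move=> v; split => [b|]; first by rewrite !ffunE Mbar_ge0.
by rewrite -(sum_Mbar v); apply: eq_bigr => b _; rewrite !ffunE.
Qed.

Lemma Ql_eq l v b : Ql l v b = PV v * Ml l v b.
Proof.
rewrite /Ql /Ml mulr_sumr; apply: eq_bigr => vs /eqP vl.
rewrite mulr_sumr; apply: eq_bigr => ys _.
by rewrite /Qj /p (bigD1 l) //= vl mulrA.
Qed.

Lemma Qbar_eq v b : Qbar v b = L%:R^-1 * \sum_(l < L) Ql l v b.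
Proof.
rewrite /Qbar /Mbar mulrCA; congr (_ * _); rewrite mulr_sumr.
by apply: eq_bigr => l _; rewrite Ql_eq.
Qed.

Lemma jointVY vb : joint_VY PX PVX Wb vb = Qbar vb.1 vb.2.
Proof.
rewrite ffunE /Qbar /PV mulr_suml; apply: eq_bigr => x _.
by rewrite !ffunE.
Qed.

Lemma marg1_VY v : marg1 (joint_VY PX PVX Wb) v = PV v.
Proof.
rewrite ffunE (eq_bigr (fun b => Qbar v b)) => [|b _]; last by rewrite jointVY.
by rewrite /Qbar -mulr_sumr sum_Mbar mulr1.
Qed.

Lemma marg2_VY b : marg2 (joint_VY PX PVX Wb) b = qbar b.
Proof. by rewrite ffunE; apply: eq_bigr => v _; rewrite jointVY. Qed.


Lemma Ql_ge0 l v b : 0 <= Ql l v b.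
Proof. by apply: sumr_ge0 => vs _; apply: sumr_ge0 => ys _; apply: Qj_ge0. Qed.

Lemma Qbar_ge0 v b : 0 <= Qbar v b.
Proof. by rewrite mulr_ge0 ?PV_ge0 ?Mbar_ge0. Qed.

Lemma qbar_ge0 b : 0 <= qbar b.
Proof. by apply: sumr_ge0 => v _; apply: Qbar_ge0. Qed.

Lemma Ql_ge_Qj l vs ys : Qj vs ys <= Ql l (tnth vs l) (tnth ys l).
Proof.
rewrite /Ql (bigD1 vs) //= (bigD1 ys) //= -addrA lerDl addr_ge0 //.
  by apply: sumr_ge0 => y _; apply: Qj_ge0.
by apply: sumr_ge0 => v _; apply: sumr_ge0 => y _; apply: Qj_ge0.
Qed.

Lemma Qbar_ge_Ql l v b : L%:R^-1 * Ql l v b <= Qbar v b.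
Proof.
rewrite Qbar_eq ler_wpM2l ?invr_ge0 ?ler0n // (bigD1 l) //= lerDl.
by apply: sumr_ge0 => i _; apply: Ql_ge0.
Qed.

Lemma qbar_ge v b : Qbar v b <= qbar b.
Proof.
rewrite /qbar (bigD1 v) //= lerDl.
by apply: sumr_ge0 => i _; apply: Qbar_ge0.
Qed.

Definition s v b := Qbar v b / qbar b.

Lemma s_ge0 v b : 0 <= s v b.
Proof. by rewrite divr_ge0 ?Qbar_ge0 ?qbar_ge0. Qed.

Lemma sum_s b : \sum_v s v b <= 1.
Proof.
rewrite /s -mulr_suml -/(qbar b).
have [->|q0] := eqVneq (qbar b) 0; first by rewrite invr0 mulr0.
by rewrite divff.
Qed.

Lemma Qj_pos vs ys : Qj vs ys != 0 -> 0 < Qj vs ys.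
Proof. by move=> h; rewrite lt_def h Qj_ge0. Qed.

Lemma Qbar_pos l vs ys : Qj vs ys != 0 -> 0 < Qbar (tnth vs l) (tnth ys l).
Proof.
move=> h; apply: (lt_le_trans _ (Qbar_ge_Ql l _ _)).
apply: mulr_gt0; first by rewrite invr_gt0 ltr0n.
exact: (lt_le_trans (Qj_pos vs ys h) (Ql_ge_Qj l vs ys)).
Qed.

Lemma s_pos l vs ys : Qj vs ys != 0 -> 0 < s (tnth vs l) (tnth ys l).
Proof.
move=> h; have q := Qbar_pos l vs ys h.
by apply: divr_gt0 => //; apply: (lt_le_trans q (qbar_ge _ _)).
Qed.

Lemma PV_pos k vs ys : Qj vs ys != 0 -> 0 < PV (tnth vs k).
Proof.
rewrite /Qj mulf_eq0 negb_or => /andP[/prodf_neq0 h _].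
by rewrite lt_def h ?PV_ge0.
Qed.

Lemma p_pos vs ys : Qj vs ys != 0 -> 0 < p vs.
Proof. by move=> h; apply: prodr_gt0 => k _; apply: (PV_pos k vs ys h). Qed.

Lemma enc_pos vs ys : Qj vs ys != 0 -> 0 < enc vs ys.
Proof.
rewrite /Qj mulf_eq0 negb_or => /andP[_ h].
by rewrite lt_def h enc_ge0.
Qed.

Lemma Ql_exch l (G : V -> Y -> R) :
  \sum_(vb : V * Y) Ql l vb.1 vb.2 * G vb.1 vb.2 =
  \sum_vs \sum_ys Qj vs ys * G (tnth vs l) (tnth ys l).
Proof.
rewrite -(pair_bigA _ (fun v b => Ql l v b * G v b)) /=.
rewrite -(@sum_partition _ _ _ (fun vs : L.-tuple V => tnth vs l)).
apply: eq_bigr => v _.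
rewrite /Ql.
under eq_bigr do rewrite mulr_suml.
rewrite exchange_big /=; apply: eq_bigr => vs /eqP vl.
rewrite -(@sum_partition _ _ _ (fun ys : L.-tuple Y => tnth ys l)).
apply: eq_bigr => b _; rewrite mulr_suml.
by apply: eq_bigr => ys /eqP yl; rewrite vl yl.
Qed.

Definition Fv v b := ln (s v b / PV v).

Lemma mutinfo_eq : mutinfo (joint_VY PX PVX Wb) =
  \sum_(vb : V * Y) Qbar vb.1 vb.2 * Fv vb.1 vb.2 / ln 2.
Proof.
rewrite /mutinfo big_mkcond /=; apply: eq_bigr => vb _.
rewrite jointVY marg1_VY marg2_VY.
have [->|q0] := eqVneq (Qbar vb.1 vb.2) 0; first by rewrite !mul0r.
rewrite /log2 /Fv /s mulrA; congr (_ * ln _ / _).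
by rewrite invfM mulrA mulrAC.
Qed.

Lemma info_sum : (L%:R * ln 2) * mutinfo (joint_VY PX PVX Wb) =
  \sum_vs \sum_ys Qj vs ys * \sum_(l < L) Fv (tnth vs l) (tnth ys l).
Proof.
have ln2 : ln 2 != 0 :> R by rewrite gt_eqF // ln_gt0 // ltr1n.
have Ln : L%:R != 0 :> R by rewrite pnatr_eq0 -lt0n.
rewrite mutinfo_eq -mulr_suml.
have -> : forall a b c : R, b != 0 -> (a * b) * (c / b) = a * c.
  by move=> a b0 c bn; field.
2: exact: ln2.
transitivity (\sum_(l < L) \sum_(vb : V * Y) Ql l vb.1 vb.2 * Fv vb.1 vb.2).
  rewrite mulr_sumr exchange_big /=; apply: eq_bigr => vb _.
  by rewrite Qbar_eq !mulrA mulfV // mul1r mulr_suml.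
under eq_bigr do rewrite Ql_exch.
rewrite exchange_big /=; apply: eq_bigr => vs _.
rewrite exchange_big /=; apply: eq_bigr => ys _.
by rewrite mulr_sumr.
Qed.

Lemma info_bound : (L%:R * ln 2) * mutinfo (joint_VY PX PVX Wb) <= ln #|C|%:R.
Proof.
rewrite info_sum.
have sQ : \sum_(z : L.-tuple V * L.-tuple Y) Qj z.1 z.2 = 1.
  by rewrite -sum_Qj (pair_bigA _ (fun vs ys => Qj vs ys)).
have [z0 z0n] : exists z : L.-tuple V * L.-tuple Y, Qj z.1 z.2 != 0.
  have : [exists z : L.-tuple V * L.-tuple Y, Qj z.1 z.2 != 0].
    apply: contraT => /existsPn H; move: sQ; rewrite big1 => [|z _].
      by move/eqP; rewrite eq_sym oner_eq0.
    by apply/eqP; move: (H z); rewrite negbK.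
  by case/existsP => z zn; exists z.
have Cpos : 0 < #|C|%:R :> R.
  rewrite ltr0n; apply/card_gt0P; exists z0.2; apply: (encC z0.1).
  by rewrite gt_eqF // (enc_pos z0.1 z0.2 z0n).
set c := #|C|%:R : R.
pose S (z : L.-tuple V * L.-tuple Y) := \prod_(l < L) s (tnth z.1 l) (tnth z.2 l).
pose T z := S z / c.
have Tpos : forall z, Qj z.1 z.2 != 0 -> 0 < T z.
  move=> z zn; apply: divr_gt0 => //; apply: prodr_gt0 => l _.
  exact: (s_pos l z.1 z.2 zn).
have Tge0 : forall z, 0 <= T z.
  move=> z; apply: divr_ge0; last exact: ltW.
  by apply: prodr_ge0 => l _; apply: s_ge0.
rewrite (pair_bigA _ (fun vs ys => Qj vs ys * \sum_(l < L) Fv (tnth vs l) (tnth ys l))) /=.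
rewrite (bigID (fun z => Qj z.1 z.2 != 0)) /= [X in _ + X]big1 ?addr0; last first.
  by move=> z; rewrite negbK => /eqP ->; rewrite mul0r.
have key : forall z, Qj z.1 z.2 != 0 ->
   Qj z.1 z.2 * \sum_(l < L) Fv (tnth z.1 l) (tnth z.2 l) =
   Qj z.1 z.2 * (ln (T z) - ln (Qj z.1 z.2)) + Qj z.1 z.2 * (ln (enc z.1 z.2) + ln c).
  move=> z zn.
  have E1 : \sum_(l < L) Fv (tnth z.1 l) (tnth z.2 l) = ln (S z) - ln (p z.1).
    rewrite /S /p ln_prod; last by move=> l _; exact: (s_pos l z.1 z.2 zn).
    rewrite ln_prod; last by move=> l _; exact: (PV_pos l z.1 z.2 zn).
    rewrite -sumrB; apply: eq_bigr => l _.
    by rewrite /Fv ln_div // posrE; [apply: (s_pos l z.1 z.2 zn)|apply: (PV_pos l z.1 z.2 zn)].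
  have E2 : ln (T z) = ln (S z) - ln c.
    rewrite /T ln_div // posrE //.
    by apply: prodr_gt0 => l _; exact: (s_pos l z.1 z.2 zn).
  have E3 : ln (Qj z.1 z.2) = ln (p z.1) + ln (enc z.1 z.2).
    rewrite /Qj lnM // posrE; [exact: (p_pos z.1 z.2 zn)|exact: (enc_pos z.1 z.2 zn)].
  rewrite E1 E2 E3; ring.
rewrite (eq_bigr _ key) big_split /=.
have G := @gibbs R _ (fun z => Qj z.1 z.2) T (fun z => Qj_ge0 z.1 z.2) Tpos.
rewrite sQ /= in G.
have Tsum : \sum_(z | Qj z.1 z.2 != 0) T z <= 1.
  apply: (@le_trans _ _ (\sum_(z : L.-tuple V * L.-tuple Y) if z.2 \in C then T z else 0)).
    rewrite big_mkcond; apply: ler_sum => z _; case: ifP => [zn|_].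
      have -> : z.2 \in C by apply: (encC z.1); rewrite gt_eqF // (enc_pos z.1 z.2 zn).
      by [].
    by case: ifP.
  rewrite -(pair_bigA _ (fun vs ys => if ys \in C then T (vs, ys) else 0)) /= exchange_big /=.
  apply: (@le_trans _ _ (\sum_(ys : L.-tuple Y) if ys \in C then c^-1 else 0)).
    apply: ler_sum => ys _; case: ifP => _; last by rewrite big1.
    rewrite /T -mulr_suml -[X in _ <= X]mul1r; apply: ler_wpM2r; first by rewrite invr_ge0 ltW.
    rewrite /S /= (@sum_tuple_prod _ _ _ (fun k v => s v (tnth ys k))).
    apply: prodr_ile1 => k _; rewrite sum_s andbT.
    by apply: sumr_ge0 => v _; apply: s_ge0.
  by rewrite -big_mkcond sumr_const -mulr_natr mulVf // gt_eqF.
have H2 : \sum_(z | Qj z.1 z.2 != 0) Qj z.1 z.2 * (ln (enc z.1 z.2) + ln c) <= ln c.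
  apply: (@le_trans _ _ (\sum_(z | Qj z.1 z.2 != 0) Qj z.1 z.2 * ln c)).
    apply: ler_sum => z zn; apply: ler_wpM2l; first exact: Qj_ge0.
    have := ln_le0 (enc_le1 z.1 z.2); lra.
  rewrite -mulr_suml.
  have -> : \sum_(z | Qj z.1 z.2 != 0) Qj z.1 z.2 = 1.
    rewrite -sQ [RHS](bigID (fun z => Qj z.1 z.2 != 0)) /= [X in _ = _ + X]big1 ?addr0 //.
    by move=> z; rewrite negbK => /eqP.
  by rewrite mul1r.
lra.
Qed.

Lemma block_marg l a b :
  \sum_(xs : L.-tuple X) \sum_(vs : L.-tuple V) \sum_(ys : L.-tuple Y)
     block_law PX PVX enc xs vs ys * ((tnth xs l == a) && (tnth ys l == b))%:R
  = \sum_v g a v * Ml l v b.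
Proof.
rewrite exchange_big /=.
transitivity (\sum_(vs : L.-tuple V) g a (tnth vs l) *
   \sum_(ys : L.-tuple Y | tnth ys l == b)
      (\prod_(k < L | k != l) PV (tnth vs k)) * enc vs ys).
  apply: eq_bigr => vs _.
  transitivity (\sum_(xs : L.-tuple X | tnth xs l == a)
      (\prod_(k < L) g (tnth xs k) (tnth vs k)) *
      \sum_(ys : L.-tuple Y | tnth ys l == b) enc vs ys).
    rewrite [RHS]big_mkcond; apply: eq_bigr => xs _.
    case: (tnth xs l == a) => /=; last first.
      by rewrite big1 // => ys _; rewrite mulr0.
    rewrite mulr_sumr [RHS]big_mkcond /=.
    apply: eq_bigr => ys _; rewrite /block_law /g.
    by case: (tnth ys l == b); rewrite ?mulr1 ?mulr0.
  rewrite -mulr_suml.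
  have -> : \sum_(xs : L.-tuple X | tnth xs l == a) \prod_(k < L) g (tnth xs k) (tnth vs k)
          = g a (tnth vs l) * \prod_(k < L | k != l) PV (tnth vs k).
    rewrite -(@sum_tuple_prod_fix _ _ _ l a (fun k c => g c (tnth vs k))).
    by apply: eq_bigr => xs _; rewrite (bigD1 l).
  by rewrite -mulrA mulr_sumr.
rewrite /Ml.
under [RHS]eq_bigr do rewrite mulr_sumr.
rewrite -[LHS](@sum_partition _ _ _ (fun vs : L.-tuple V => tnth vs l)).
by apply: eq_bigr => v _; apply: eq_bigr => vs /eqP ->.
Qed.

Lemma card_sum (P : pred 'I_L) : (#|[set k | P k]|%:R : R) = \sum_(k < L) (P k)%:R.
Proof.
rewrite -sum1_card natr_sum big_mkcond /=; apply: eq_bigr => k _.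
by rewrite inE; case: (P k).
Qed.

Lemma mix_eq ab :
  \sum_(xs : L.-tuple X) \sum_(vs : L.-tuple V) \sum_(ys : L.-tuple Y)
     block_law PX PVX enc xs vs ys * empirical R xs ys ab
  = joint_XY PX PVX Wb ab.
Proof.
case: ab => a b.
transitivity (L%:R^-1 * \sum_(l < L) \sum_v g a v * Ml l v b); last first.
  rewrite [RHS]ffunE /= exchange_big mulr_sumr /=; apply: eq_bigr => v _.
  rewrite !ffunE /Mbar /g -!mulr_sumr; ring.
have -> : \sum_(l < L) \sum_v g a v * Ml l v b =
  \sum_(l < L) \sum_(xs : L.-tuple X) \sum_(vs : L.-tuple V) \sum_(ys : L.-tuple Y)
     block_law PX PVX enc xs vs ys * ((tnth xs l == a) && (tnth ys l == b))%:R.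
  by apply: eq_bigr => l _; rewrite block_marg.
transitivity (L%:R^-1 * \sum_(xs : L.-tuple X) \sum_(vs : L.-tuple V) \sum_(ys : L.-tuple Y)
  \sum_(l < L) (block_law PX PVX enc xs vs ys *
      ((tnth xs l == a) && (tnth ys l == b))%:R)).
  rewrite mulr_sumr; apply: eq_bigr => xs _.
  rewrite mulr_sumr; apply: eq_bigr => vs _.
  rewrite mulr_sumr; apply: eq_bigr => ys _.
  rewrite ffunE card_sum mulr_suml !mulr_sumr; apply: eq_bigr => l _.
  rewrite xpair_eqE /=; ring.
congr (_ * _).
under eq_bigr => xs _ do under eq_bigr => vs _ do rewrite exchange_big.
under eq_bigr => xs _ do rewrite exchange_big.
by rewrite exchange_big.
Qed.

Lemma block_ge0 xs vs ys : 0 <= block_law PX PVX enc xs vs ys.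
Proof.
rewrite /block_law mulr_ge0 ?enc_ge0 // prodr_ge0 // => k _.
exact: g_ge0.
Qed.

Lemma block_sum : \sum_(xs : L.-tuple X) \sum_(vs : L.-tuple V) \sum_(ys : L.-tuple Y)
   block_law PX PVX enc xs vs ys = 1.
Proof.
rewrite exchange_big /= -sum_p; apply: eq_bigr => vs _.
transitivity (\sum_(xs : L.-tuple X) \prod_(k < L) (PX (tnth xs k) * PVX (tnth xs k) (tnth vs k))).
  apply: eq_bigr => xs _; rewrite /block_law -mulr_sumr.
  by case: (encd vs) => _ ->; rewrite mulr1.
by rewrite (@sum_tuple_prod _ _ _ (fun k c => PX c * PVX c (tnth vs k))).
Qed.

Lemma empirical_dist (xs : L.-tuple X) (ys : L.-tuple Y) : is_dist (empirical R xs ys).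
Proof.
split => [ab|]; first by rewrite ffunE divr_ge0 ?ler0n.
under eq_bigr do rewrite ffunE card_sum.
rewrite -mulr_suml exchange_big /=.
rewrite (eq_bigr (fun _ => 1)) => [|l _].
  by rewrite sumr_const card_ord mulfV // pnatr_eq0 -lt0n.
rewrite (bigD1 (tnth xs l, tnth ys l)) //= eqxx big1 ?addr0 // => ab.
by rewrite eq_sym => /negbTE ->.
Qed.

Lemma dist_bound (d : {ffun X * Y -> R} -> R) (hd : nonneg_convex_dist d) :
  d (joint_XY PX PVX Wb) <= expected_distortion PX PVX enc d.
Proof.
pose w (z : L.-tuple X * (L.-tuple V * L.-tuple Y)) :=
  block_law PX PVX enc z.1 z.2.1 z.2.2.
pose Q (z : L.-tuple X * (L.-tuple V * L.-tuple Y)) := empirical R z.1 z.2.2.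
have -> : joint_XY PX PVX Wb = [ffun t => \sum_z w z * Q z t].
  apply/ffunP => t; rewrite -mix_eq ffunE.
  rewrite -(pair_bigA _ (fun xs (p : L.-tuple V * L.-tuple Y) =>
     block_law PX PVX enc xs p.1 p.2 * empirical R xs p.2 t)) /=.
  apply: eq_bigr => xs _.
  by rewrite -(pair_bigA _ (fun vs ys => block_law PX PVX enc xs vs ys * empirical R xs ys t)).
apply: (le_trans (@convex_fin R _ _ d hd w Q _ _ _)).
- by move=> z; apply: block_ge0.
- rewrite -block_sum -(pair_bigA _ (fun xs (p : L.-tuple V * L.-tuple Y) =>
     block_law PX PVX enc xs p.1 p.2)) /=.
  apply: eq_bigr => xs _.
  by rewrite -(pair_bigA _ (fun vs ys => block_law PX PVX enc xs vs ys)).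
- by move=> z; apply: empirical_dist.
rewrite /expected_distortion.
rewrite -(pair_bigA _ (fun xs (p : L.-tuple V * L.-tuple Y) =>
     block_law PX PVX enc xs p.1 p.2 * d (empirical R xs p.2))) /=.
rewrite le_eqVlt; apply/orP; left; apply/eqP/eq_bigr => xs _.
by rewrite -(pair_bigA _ (fun vs ys => block_law PX PVX enc xs vs ys * d (empirical R xs ys))).
Qed.

Lemma C_pos : 0 < #|C|%:R :> R.
Proof.
have sQ : \sum_(z : L.-tuple V * L.-tuple Y) Qj z.1 z.2 = 1.
  by rewrite -sum_Qj (pair_bigA _ (fun vs ys => Qj vs ys)).
have [z0 z0n] : exists z : L.-tuple V * L.-tuple Y, Qj z.1 z.2 != 0.
  have : [exists z : L.-tuple V * L.-tuple Y, Qj z.1 z.2 != 0].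
    apply: contraT => /existsPn H; move: sQ; rewrite big1 => [|z _].
      by move/eqP; rewrite eq_sym oner_eq0.
    by apply/eqP; move: (H z); rewrite negbK.
  by case/existsP => z zn; exists z.
rewrite ltr0n; apply/card_gt0P; exists z0.2; apply: (encC z0.1).
by rewrite gt_eqF // (enc_pos z0.1 z0.2 z0n).
Qed.

End Main.

Local Open Scope classical_set_scope.

Theorem lemma3p1 (R : realType) (X V Y : finType)
  (PX : {ffun X -> R}) (PVX : {ffun X -> {ffun V -> R}})
  (d : {ffun X * Y -> R} -> R)
  (L : nat) (rate : R) (C : {set L.-tuple Y})
  (enc : {ffun L.-tuple V -> {ffun L.-tuple Y -> R}}) (Delta : R) :
  is_dist PX -> is_channel PVX -> nonneg_convex_dist d ->
  (0 < L)%N ->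
  (#|C|%:R <= 2 `^ (L%:R * rate)) ->
  (forall v, is_dist (enc v)) ->
  (forall v y, enc v y != 0 -> y \in C) ->
  expected_distortion PX PVX enc d = Delta ->
  inf [set r : R | exists W : {ffun V -> {ffun Y -> R}},
          [/\ is_channel W, d (joint_XY PX PVX W) <= Delta
            & r = mutinfo (joint_VY PX PVX W)]] <= rate.
Proof.
move=> PXd PVXc hd L0 Crate encd encC <-.
set S := [set r : R | _].
set W := Wb _ _ _ _ PX PVX _ enc.
have MIin : S (mutinfo (joint_VY PX PVX W)).
  exists W; split => //; first exact: (@Wb_channel _ _ _ _ _ _ _ _ PXd PVXc L0 encd).
  exact: (@dist_bound _ _ _ _ _ _ _ _ PXd PVXc L0 encd d hd).
have Cp := @C_pos _ _ _ _ _ _ _ _ PXd PVXc encd C encC.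
have ln2 : 0 < ln 2 :> R by rewrite ln_gt0 // ltr1n.
have Lln2 : 0 < L%:R * ln 2 :> R by rewrite mulr_gt0 // ltr0n.
have lnC : ln #|C|%:R <= (L%:R * ln 2) * rate.
  apply: (le_trans (y := ln (2 `^ (L%:R * rate)))).
    by rewrite ler_ln ?posrE // powR_gt0.
  by rewrite ln_powR mulrAC.
have MIle : mutinfo (joint_VY PX PVX W) <= rate.
  rewrite -(ler_pM2l Lln2); apply: le_trans lnC.
  exact: (@info_bound _ _ _ _ _ _ _ _ PXd PVXc L0 encd C encC).
have rate0 : 0 <= rate.
  rewrite -(pmulr_rge0 _ Lln2); apply: le_trans lnC.
  by apply: ln_ge0; rewrite ler1n; rewrite ltr0n in Cp.
case: (pselect (has_lbound S)) => hl.
  exact: le_trans (ge_inf hl MIin) MIle.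
by rewrite inf_out // => -[].
Qed.
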